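(* Let $W_1$ and $W_2$ be arbitrary quantum walks on $\ell^2(\mathbb{Z})\otimes\mathbb{C}^2$, and let $W_1\oplus W_2$ be their direct sum on $\mathcal H=\mathcal H_e\oplus\mathcal H_o$ with respect to even and odd lattice sites (as described below). Then $$v(W_1\oplus W_2)=2\max\{v(W_1),v(W_2)\}.$$
   Context: $\mathcal H=\ell^2(\mathbb{Z})\otimes\mathbb{C}^2$ with basis $\delta_k^\pm=\delta_k\otimes e_\pm$. State-dependent shifts: $S_\pm=T^{\pm1}\otimes P_\pm+\mathbb{1}\otimes P_\mp$, where $T\delta_k=\delta_{k+1}$ and $P_\pm$ are the projections onto $e_+=(1,0)^\top$, $e_-=(0,1)^\top$. A coin operator acts as $C(\delta_k\otimes v)=\delta_k\otimes C(k)v$ with $C(k)$ unitary $2\times2$ matrices. A quantum walk is a finite product of shift operators $S_\pm$ and coin operators. $Q\delta_k^\pm=k\delta_k^\pm$ is the position operator. For a walk $W$ and normalized $\psi\in\mathrm{dom}(Q)$, $v(W,\psi)=\limsup_{t\to\infty}\frac1t\|QW^t\psi\|$, and $v(W)=\sup\{v(W,\psi):\psi\in\mathrm{dom}(Q),\|\psi\|=1\}$. The direct sum is taken with respect to $\mathcal H_e=\ell^2(2\mathbb{Z})\otimes\mathbb{C}^2$ and $\mathcal H_o=\ell^2(2\mathbb{Z}+1)\otimes\mathbb{C}^2$, each identified with $\ell^2(\mathbb{Z})\otimes\mathbb{C}^2$ via $\delta_{2k}^\pm\mapsto\delta_k^\pm$ and $\delta_{2k+1}^\pm\mapsto\delta_k^\pm$;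 $W_1$ acts on $\mathcal H_e$ and $W_2$ on $\mathcal H_o$. *)

(* Defs.v *)
From HB Require Import structures.
From mathcomp Require Import all_boot all_order all_algebra.
From mathcomp Require Import spectral.
From mathcomp.real_closed Require Import complex.
From mathcomp Require Import all_classical all_reals.
From mathcomp Require Import ereal topology normedtype sequences esum.

Set Implicit Arguments.
Unset Strict Implicit.
Unset Printing Implicit Defensive.
Import Order.TTheory GRing.Theory Num.Theory.
Local Open Scope ring_scope.
Local Open Scope classical_set_scope.

(* States: functions Z -> C^2, psi k = column vector (psi(delta_k^+), psi(delta_k^-)).
   Index 0 of the column = e_+, index 1 = e_-. *)
Section QW.
Variable R : realType.
Local Notation C := (R[i]).

Definition state := int -> 'cV[C]_2.

Definition csq (z : C) : R := complex.Re z ^+ 2 + complex.Im z ^+ 2.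

Definition vsq (v : 'cV[C]_2) : R := csq (v 0 0) + csq (v 1 0).

Definition norm2 (psi : state) : \bar R :=
  \esum_(k in [set: int]) (vsq (psi k))%:E.

Definition normQ2 (psi : state) : \bar R :=
  \esum_(k in [set: int]) ((k%:~R) ^+ 2 * vsq (psi k))%:E.

Definition esqrt (x : \bar R) : \bar R :=
  match x with EFin r => (Num.sqrt r)%:E | _ => +oo%E end.

Definition in_domQ (psi : state) : Prop :=
  (norm2 psi < +oo)%E /\ (normQ2 psi < +oo)%E.

(* Generators of quantum walks: state-dependent shifts S_+ (true), S_- (false),
   and coin operators given by a field of 2x2 matrices. *)
Inductive qw_gen := QShift of bool | QCoin of (int -> 'M[C]_2).

(* S_+ = T (x) P_+ + 1 (x) P_-,  S_- = T^{-1} (x) P_- + 1 (x) P_+ ,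
   T delta_k = delta_{k+1}, so (T psi)(k) = psi(k-1). *)
Definition shift (b : bool) (psi : state) : state := fun k =>
  \col_i (if b then (if i == 0 then psi (k - 1) i 0 else psi k i 0)
               else (if i == 0 then psi k i 0 else psi (k + 1) i 0)).

Definition coin (c : int -> 'M[C]_2) (psi : state) : state :=
  fun k => c k *m psi k.

Definition gen_act (g : qw_gen) : state -> state :=
  match g with QShift b => shift b | QCoin c => coin c end.

Definition gen_ok (g : qw_gen) : Prop :=
  match g with QShift _ => True | QCoin c => forall k, c k \is unitarymx end.

Definition is_walk (w : seq qw_gen) : Prop := forall i, (i < size w)%N -> gen_ok (nth (QShift true) w i).

Definition walk_act (w : seq qw_gen) : state -> state :=
  foldr (fun g f => gen_act g \o f) id w.

Definition vel_at (W : state -> state) (psi : state) : \bar R :=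
  limn_esup (fun t : nat => ((t%:R)^-1)%:E * esqrt (normQ2 (iter t W psi)))%E.

Definition vel (W : state -> state) : \bar R :=
  ereal_sup [set vel_at W psi | psi in [set psi | in_domQ psi /\ norm2 psi = 1%E]].

(* Direct sum w.r.t. even and odd sites, with delta_{2k} |-> delta_k on H_e and
   delta_{2k+1} |-> delta_k on H_o. *)
Definition dsum (W1 W2 : state -> state) : state -> state := fun psi n =>
  if (n %% 2 == 0)%Z then W1 (fun k => psi (2 * k)%R) (n %/ 2)%Z
  else W2 (fun k => psi (2 * k + 1)%R) (n %/ 2)%Z.

End QW.

(* Main.v *)
Require Import Defs.
From HB Require Import structures.
From mathcomp Require Import all_boot all_order all_algebra.
From mathcomp Require Import spectral.
From mathcomp.real_closed Require Import complex.
From mathcomp Require Import all_classical all_reals.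
From mathcomp Require Import ereal topology normedtype sequences esum.
From mathcomp Require Import lra ring.
Import Order.TTheory GRing.Theory Num.Theory.
Local Open Scope ring_scope.
Set Implicit Arguments.
Unset Strict Implicit.
Unset Printing Implicit Defensive.
From mathcomp Require Import zify.
Local Open Scope classical_set_scope.
Section E.
Variable R : realType.
Local Open Scope ereal_scope.

Lemma esumZ (T : choiceType) (S : set T) (a : T -> \bar R) (r : R) :
  (0 <= r)%R -> (forall x, 0 <= a x) ->
  \esum_(i in S) (r%:E * a i) = r%:E * \esum_(i in S) a i.
Proof.
move=> r0 a0; rewrite /esum -ereal_supZl //; last first.
  by apply/set0P; exists 0; exists set0; [exact: fsets_set0|rewrite fsbig_set0].
congr ereal_sup; apply/seteqP; split => x /=.
  by move=> [A hA <-]; exists (\sum_(i \in A) a i); [exists A|rewrite ge0_mule_fsumr].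
by move=> [y [A hA <-] <-]; exists A => //; rewrite ge0_mule_fsumr.
Qed.

Lemma esum_shift (f : int -> \bar R) (d : int) :
  \esum_(k in [set: int]) f k = \esum_(k in [set: int]) f (k + d)%R.
Proof.
apply: (reindex_esum [set: int] [set: int] (fun k => k + d)%R f).
split => //.
- by move=> x y _ _ /= /addIr.
- by move=> y _; exists (y - d)%R; [by []|rewrite /= subrK].
Qed.

Lemma esum_evenodd (f : int -> \bar R) : (forall k, 0 <= f k) ->
  \esum_(k in [set: int]) f k =
  \esum_(k in [set: int]) f (2 * k)%R + \esum_(k in [set: int]) f (2 * k + 1)%R.
Proof.
move=> f0; rewrite (esumID [set n : int | (n %% 2 == 0)%Z]) //.
rewrite !setTI.
have -> : [set n : int | (n %% 2 == 0)%Z] = (fun k => 2 * k)%R @` [set: int].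
  apply/seteqP; split => n /=.
    move=> /eqP h; exists (n %/ 2)%Z; [by []|lia].
  by move=> [k _ <-]; apply/eqP; lia.
have -> : ~` ((fun k => 2 * k)%R @` [set: int]) = (fun k => 2 * k + 1)%R @` [set: int].
  apply/seteqP; split => n /=.
    move=> h; exists (n %/ 2)%Z; [by []|].
    have : (n %% 2 != 0)%Z by apply/negP => /eqP e; apply: h; exists (n %/ 2)%Z; [by []|lia].
    lia.
  by move=> [k _ <-] [j _]; lia.
rewrite !esum_image //.
- by move=> x y _ _ /=; lia.
- by move=> x y _ _ /=; lia.
Qed.

Lemma esum_le_term (T : choiceType) (f : T -> \bar R) (x : T) :
  (forall k, 0 <= f k) -> f x <= \esum_(k in [set: T]) f k.
Proof.
move=> f0; apply: esum_ge; exists [set x]; first by split => //; exact: finite_set1.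
by rewrite fsbig_set1.
Qed.

Lemma esum_single (T : choiceType) (f : T -> \bar R) (x : T) :
  (forall k, 0 <= f k) -> (forall k, k <> x -> f k = 0) ->
  \esum_(k in [set: T]) f k = f x.
Proof.
move=> f0 fx; rewrite (esumID [set x]) // setTI esum_set1 // esum1 ?adde0 //.
by move=> k [_ /= h]; apply: fx.
Qed.
End E.
Local Open Scope sesquilinear_scope.
Section S.
Variable R : realType.
Local Notation C := (R[i]).
Lemma csqE (z : C) : (csq z)%:C%C = (z^* )%R * z.
Proof. case: z => a b. rewrite /csq /=. apply/eqP; rewrite eq_complex /=. simpc. by rewrite [a * b]mulrC subrr eqxx. Qed.
Lemma vsqE (v : 'cV[C]_2) : (vsq v)%:C%C = (v^t* *m v) 0 0.
Proof. rewrite mxE big_ord_recr big_ord1 /= !mxE /vsq rmorphD /= !csqE.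
have -> : widen_ord (leqnSn 1) ord0 = 0 :> 'I_2 by apply/val_inj.
by have -> : ord_max = 1 :> 'I_2 by apply/val_inj. Qed.
Lemma vsq_unitary (U : 'M[C]_2) v : U \is unitarymx -> vsq (U *m v) = vsq v.
Proof. move=> hU. apply: (@complexI R). rewrite !vsqE.
rewrite trmx_mul map_mxM mulmxA -[_ *m U^t* *m U]mulmxA.
have -> : U ^t* *m U = 1%:M by rewrite -[LHS]mul1mx mulmxA mulmxKtV.
by rewrite mulmx1. Qed.
Local Open Scope ereal_scope.
Definition scal (c : R) (psi : state R) : state R := fun k => (c%:C%C *: psi k)%R.

Lemma vsq_ge0 (v : 'cV[C]_2) : (0 <= vsq v)%R.
Proof. by rewrite /vsq addr_ge0 // /csq addr_ge0 // sqr_ge0. Qed.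

Lemma csq_scal (c : R) (z : C) : csq (c%:C%C * z)%R = (c ^+ 2 * csq z)%R.
Proof. case: z => a b; rewrite /csq /=. simpc. rewrite /=. ring. Qed.

Lemma vsq_scal (c : R) v : vsq (c%:C%C *: v)%R = (c ^+ 2 * vsq v)%R.
Proof. by rewrite /vsq !mxE; move: (v _ _) (v _ _) => a b; rewrite !csq_scal -mulrDr. Qed.

Lemma gen_act_scal (g : qw_gen R) c psi : gen_act g (scal c psi) = scal c (gen_act g psi).
Proof.
apply/funext => k; case: g => [b|cf] /=.
  apply/matrixP => i j; rewrite /shift /scal !mxE.
  by case: b; case: (i == 0%R).
by rewrite /coin /scal scalemxAr.
Qed.

Lemma walk_act_scal (w : seq (qw_gen R)) c psi : walk_act w (scal c psi) = scal c (walk_act w psi).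
Proof. by elim: w => [//|g w IH] /=; rewrite IH gen_act_scal. Qed.

Lemma iter_scal (W : state R -> state R) t c psi :
  (forall c psi, W (scal c psi) = scal c (W psi)) ->
  iter t W (scal c psi) = scal c (iter t W psi).
Proof. by move=> hW; elim: t => [//|t IH] /=; rewrite IH hW. Qed.

Lemma norm2_scal c psi : norm2 (scal c psi) = (c ^+ 2)%:E * norm2 psi.
Proof.
rewrite /norm2 -esumZ ?sqr_ge0 //; last by move=> x; rewrite lee_fin vsq_ge0.
by apply: eq_esum => k _; rewrite vsq_scal.
Qed.

Lemma normQ2_scal c psi : normQ2 (scal c psi) = (c ^+ 2)%:E * normQ2 psi.
Proof.
rewrite /normQ2 -esumZ ?sqr_ge0 //; last by move=> x; rewrite lee_fin mulr_ge0 ?sqr_ge0 ?vsq_ge0.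
by apply: eq_esum => k _; rewrite vsq_scal EFinM; congr (_%:E); ring.
Qed.

Lemma norm2_gen (g : qw_gen R) psi : gen_ok g -> norm2 (gen_act g psi) = norm2 psi.
Proof.
case: g => [b|cf] /= hg; last first.
  by rewrite /norm2; apply: eq_esum => k _; rewrite /coin vsq_unitary.
rewrite /norm2 /vsq /shift.
have e0 : forall x : C, 0 <= (csq x)%:E by move=> x; rewrite lee_fin /csq addr_ge0 // sqr_ge0.
case: b.
  under eq_esum do rewrite !mxE /= EFinD.
  rewrite esumD //.
  under [X in _ = X]eq_esum do rewrite EFinD.
  rewrite esumD //.
  by rewrite [in LHS](esum_shift _ 1) /=; under eq_esum do rewrite addrK.
under eq_esum do rewrite !mxE /= EFinD.
rewrite esumD //.
under [X in _ = X]eq_esum do rewrite EFinD.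
rewrite esumD //.
by rewrite [in RHS](esum_shift (fun k => (csq (psi k 1 0))%:E) 1).
Qed.

Lemma norm2_walk (w : seq (qw_gen R)) psi : is_walk w -> norm2 (walk_act w psi) = norm2 psi.
Proof.
elim: w => [//|g w IH] hw /=.
rewrite norm2_gen; first by apply: IH => i hi; exact: (hw i.+1).
exact: (hw 0%N).
Qed.

Lemma norm2_iter (w : seq (qw_gen R)) t psi : is_walk w -> norm2 (iter t (walk_act w) psi) = norm2 psi.
Proof. by move=> hw; elim: t => [//|t IH] /=; rewrite norm2_walk. Qed.
End S.
Section A.
Variable R : realType.
Local Open Scope ereal_scope.

Definition Ev (q : nat -> \bar R) (s : R) :=
  forall e : R, (0 < e)%R -> \forall t \near \oo, q t <= ((s + e) * t%:R ^+ 2)%:E.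

Lemma LS (u : nat -> \bar R) (c : R) :
  limn_esup u <= c%:E <->
  (forall e : R, (0 < e)%R -> \forall t \near \oo, u t <= (c + e)%:E).
Proof.
rewrite /limn_esup limf_esupE; split.
  move=> H e e0.
  have : ereal_inf [set ereal_sup (u @` V) | V in \oo] < (c + e)%:E.
    by apply: (le_lt_trans H); rewrite lte_fin ltrDl.
  move=> /ereal_inf_lt [y [V hV <-]] hy.
  apply: filterS hV => t Vt.
  apply: le_trans (ltW hy); apply: ereal_sup_ubound; exists t.
  by [].
by [].
move=> H; apply/lee_addgt0Pr => e e0.
apply: (@le_trans _ _ (ereal_sup (u @` [set t | u t <= (c + e)%:E]))).
  by apply: ereal_inf_lbound; exists [set t | u t <= (c + e)%:E] => //; exact: H.
by apply: ge_ereal_sup => _ [t ht <-]; rewrite EFinD in ht.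
Qed.

Lemma PW (q : \bar R) (t : nat) (d : R) : (0 < t)%N -> (0 <= d)%R -> 0 <= q ->
  ((t%:R^-1)%:E * esqrt q <= d%:E) <-> (q <= ((d * t%:R) ^+ 2)%:E).
Proof.
move=> t0 d0; case: q => [r| |] //= r0.
- rewrite -EFinM !lee_fin; rewrite lee_fin in r0.
  have tp : (0 < t%:R :> R)%R by rewrite ltr0n.
  rewrite mulrC ler_pdivrMr //.
  have -> : (r <= (d * t%:R) ^+ 2)%R = (Num.sqrt r <= Num.sqrt ((d * t%:R) ^+ 2))%R.
    by rewrite ler_sqrt // sqr_ge0.
  by rewrite sqrtr_sqr ger0_norm // mulr_ge0 // ltW.
- split => // H; exfalso; move: H.
  by rewrite gt0_muley ?lte_fin ?invr_gt0 ?ltr0n.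
Qed.

Lemma VEL (q : nat -> \bar R) (c : R) : (forall t, 0 <= q t) -> (0 <= c)%R ->
  limn_esup (fun t => (t%:R^-1)%:E * esqrt (q t)) <= c%:E <-> Ev q (c ^+ 2).
Proof.
move=> q0 c0; rewrite LS; split.
- move=> H e e0.
  pose e' := (e / (2 * c + 1 + e))%R.
  have D0 : (0 < 2 * c + 1 + e)%R by lra.
  have he : (e' * (2 * c + 1 + e) = e)%R by rewrite /e' mulfVK // gt_eqF.
  have e'0 : (0 < e')%R by rewrite /e' divr_gt0.
  move: (H e' e'0) (nbhs_infty_gt 0); apply: filterS2 => t ht t0.
  have := (PW t0 (addr_ge0 c0 (ltW e'0)) (q0 t)).1 ht.
  move/le_trans; apply; rewrite lee_fin exprMn ler_wpM2r ?sqr_ge0 //.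
  nra.
- move=> H e e0.
  move: (H (e ^+ 2)%R (exprn_gt0 2 e0)) (nbhs_infty_gt 0); apply: filterS2 => t ht t0.
  have ce : (0 <= c + e)%R by lra.
  apply/(PW t0 ce (q0 t)).
  apply: (le_trans ht); rewrite lee_fin exprMn ler_wpM2r ?sqr_ge0 //.
  nra.
Qed.

Lemma Ev_le (q q' : nat -> \bar R) s : (forall t, q t <= q' t) -> Ev q' s -> Ev q s.
Proof. by move=> h H e e0; apply: filterS (H e e0) => t; apply: le_trans. Qed.

Lemma Ev_mono q (s s' : R) : (s <= s')%R -> Ev q s -> Ev q s'.
Proof.
move=> ss H e e0; apply: filterS (H e e0) => t /le_trans; apply.
by rewrite lee_fin ler_wpM2r ?sqr_ge0 // lerD2r.
Qed.

Lemma Ev_lim q s : (forall e : R, (0 < e)%R -> Ev q (s + e)) -> Ev q s.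
Proof.
move=> H e e0; have e2 : (0 < e / 2)%R by rewrite divr_gt0.
apply: filterS (H _ e2 _ e2) => t; rewrite -addrA -splitr; done.
Qed.

Lemma Ev_add q1 q2 s1 s2 : Ev q1 s1 -> Ev q2 s2 -> Ev (fun t => q1 t + q2 t) (s1 + s2).
Proof.
move=> H1 H2 e e0; have e2 : (0 < e / 2)%R by rewrite divr_gt0.
move: (H1 _ e2) (H2 _ e2); apply: filterS2 => t h1 h2.
apply: le_trans (leeD h1 h2) _; rewrite -EFinD lee_fin -mulrDl.
by rewrite ler_wpM2r ?sqr_ge0 //; lra.
Qed.

Lemma Ev_scale q s (a : R) : (0 < a)%R -> Ev q s -> Ev (fun t => a%:E * q t) (a * s).
Proof.
move=> a0 H e e0; have ea : (0 < e / a)%R by rewrite divr_gt0.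
apply: filterS (H _ ea) => t ht.
apply: le_trans (lee_wpmul2l (ltW _) ht) _; first by rewrite lte_fin.
rewrite -EFinM lee_fin mulrA ler_wpM2r ?sqr_ge0 // mulrDr mulrCA divff ?gt_eqF //.
by rewrite mulr1.
Qed.

Lemma Ev_const (K : R) : Ev (fun _ => K%:E) 0.
Proof.
move=> e e0; move: (nbhs_infty_ger (K / e)) (nbhs_infty_gt 0); apply: filterS2 => t h1 h2.
rewrite lee_fin add0r.
have t1 : (1 <= t%:R :> R)%R by rewrite ler1n.
have : (K <= t%:R * e)%R by move: h1; rewrite ler_pdivrMr.
have h3 : (0 <= e * t%:R)%R by rewrite mulr_ge0 // ltW.
rewrite expr2; nra.
Qed.

Lemma Ev_delta (q q' : nat -> \bar R) s : (0 <= s)%R ->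
  (forall d : R, (0 < d)%R -> exists K : R, forall t, q t <= (1 + d)%:E * q' t + K%:E) ->
  Ev q' s -> Ev q s.
Proof.
move=> s0 H H'; apply: Ev_lim => e e0.
pose d := (e / (s + 1))%R.
have d0 : (0 < d)%R by rewrite /d divr_gt0 // ltr_wpDl.
have hd : (d * (s + 1) = e)%R by rewrite /d mulfVK // gt_eqF // ltr_wpDl.
have [K hK] := H d d0.
apply: (Ev_le (q' := fun t => (1 + d)%:E * q' t + K%:E) hK).
apply: (Ev_mono (s := ((1 + d) * s + 0)%R)).
  nra.
apply: (Ev_add (q1 := fun t => (1 + d)%:E * q' t) (q2 := fun _ => K%:E)); last exact: Ev_const.
apply: Ev_scale => //; lra.
Qed.
End A.

Section M.
Variable R : realType.
Local Notation C := (R[i]).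
Local Open Scope ereal_scope.
Local Notation ev psi := (fun k : int => psi (2 * k)%R).
Local Notation od psi := (fun k : int => psi (2 * k + 1)%R).
Local Notation zs := (fun _ : int => (0 : 'cV[C]_2)%R).

Lemma dsum_at_ev (A B : state R -> state R) psi k :
  dsum A B psi (2 * k)%R = A (ev psi) k.
Proof.
rewrite /dsum ifT; last by apply/eqP; lia.
by have -> : ((2 * k)%R %/ 2)%Z = k by lia.
Qed.

Lemma dsum_at_od (A B : state R -> state R) psi k :
  dsum A B psi (2 * k + 1)%R = B (od psi) k.
Proof.
rewrite /dsum ifF; last by apply/negbTE/negP => /eqP; lia.
by have -> : ((2 * k + 1)%R %/ 2)%Z = k by lia.
Qed.

Lemma dsum_ev (A B : state R -> state R) psi : ev (dsum A B psi) = A (ev psi).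
Proof. by apply/funext => k; rewrite dsum_at_ev. Qed.

Lemma dsum_od (A B : state R -> state R) psi : od (dsum A B psi) = B (od psi).
Proof. by apply/funext => k; rewrite dsum_at_od. Qed.

Lemma iter_dsum (A B : state R -> state R) t psi :
  iter t (dsum A B) psi = dsum (iter t A) (iter t B) psi.
Proof.
elim: t => [|t IH] /=.
  apply/funext => n; rewrite /dsum; case: ifP => /eqP h; congr (psi _); lia.
by rewrite IH {1}/dsum dsum_ev dsum_od.
Qed.

Lemma vsq0 : vsq (0 : 'cV[C]_2)%R = 0%R.
Proof. by rewrite /vsq !mxE /csq /= expr0n /= !addr0. Qed.

Lemma csq_ge0 (z : C) : (0 <= csq z)%R.
Proof. by rewrite /csq addr_ge0 // sqr_ge0. Qed.

Lemma csq_eq0 (z : C) : csq z = 0%R -> z = 0%R.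
Proof.
case: z => a b; rewrite /csq /= => h.
have ha : a = 0%R by nra.
have hb : b = 0%R by nra.
by rewrite ha hb.
Qed.

Lemma vsq_eq0 (v : 'cV[C]_2) : vsq v = 0%R -> v = 0%R.
Proof.
rewrite /vsq => h.
have h0 : csq (v 0%R 0%R) = 0%R.
  have := csq_ge0 (v 0%R 0%R); have := csq_ge0 (v 1%R 0%R); lra.
have h1 : csq (v 1%R 0%R) = 0%R.
  have := csq_ge0 (v 0%R 0%R); have := csq_ge0 (v 1%R 0%R); lra.
apply/matrixP => i j; rewrite (ord1 j) mxE.
case: i => [[|[|i]] hi] //.
- have -> : Ordinal hi = 0%R by apply/val_inj.
  exact: csq_eq0.
- have -> : Ordinal hi = 1%R by apply/val_inj.
  exact: csq_eq0.
Qed.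


Lemma realcM (a b : R) : ((a%:C)%C * (b%:C)%C)%R = ((a * b)%R%:C)%C :> C.
Proof. by apply/eqP; rewrite eq_complex /=; simpc. Qed.

Lemma scal_comp (a b : R) (psi : state R) : scal a (scal b psi) = scal (a * b)%R psi.
Proof. by apply/funext => k; rewrite /scal scalerA realcM. Qed.

Lemma scal1 (psi : state R) : scal (1 : R) psi = psi.
Proof. by apply/funext => k; rewrite /scal scale1r. Qed.

Lemma scal0 (psi : state R) : scal (0 : R) psi = zs.
Proof. by apply/funext => k; rewrite /scal scale0r. Qed.

Lemma iter_walk_zs (w : seq (qw_gen R)) t : iter t (walk_act w) zs = zs.
Proof.
rewrite -(scal0 zs) iter_scal ?scal0 //.
by move=> c psi; rewrite walk_act_scal.
Qed.

Lemma norm2_zs : norm2 zs = 0.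
Proof. by rewrite /norm2 esum1 // => k _; rewrite vsq0. Qed.

Lemma normQ2_zs : normQ2 zs = 0.
Proof. by rewrite /normQ2 esum1 // => k _; rewrite vsq0 mulr0. Qed.

Lemma norm2_ge0 (psi : state R) : 0 <= norm2 psi.
Proof. by apply: esum_ge0 => k _; rewrite lee_fin vsq_ge0. Qed.

Lemma normQ2_ge0 (psi : state R) : 0 <= normQ2 psi.
Proof. by apply: esum_ge0 => k _; rewrite lee_fin mulr_ge0 ?sqr_ge0 ?vsq_ge0. Qed.

Lemma norm2_split (psi : state R) : norm2 psi = norm2 (ev psi) + norm2 (od psi).
Proof. by rewrite /norm2 esum_evenodd // => k; rewrite lee_fin vsq_ge0. Qed.

Lemma normQ2_dsum (A B : state R -> state R) psi :
  normQ2 (dsum A B psi) =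
  \esum_(k in [set: int]) ((((2 * k)%R)%:~R ^+ 2 * vsq (A (ev psi) k))%R)%:E +
  \esum_(k in [set: int]) ((((2 * k + 1)%R)%:~R ^+ 2 * vsq (B (od psi) k))%R)%:E.
Proof.
rewrite /normQ2 esum_evenodd; last by move=> k; rewrite lee_fin mulr_ge0 ?sqr_ge0 ?vsq_ge0.
by congr (_ + _); apply: eq_esum => k _; rewrite ?dsum_at_ev ?dsum_at_od.
Qed.

Lemma normQ2_split (psi : state R) :
  normQ2 psi =
  \esum_(k in [set: int]) ((((2 * k)%R)%:~R ^+ 2 * vsq (psi (2 * k)%R))%R)%:E +
  \esum_(k in [set: int]) ((((2 * k + 1)%R)%:~R ^+ 2 * vsq (psi (2 * k + 1)%R))%R)%:E.
Proof.
by rewrite /normQ2 esum_evenodd // => k; rewrite lee_fin mulr_ge0 ?sqr_ge0 ?vsq_ge0.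
Qed.


Lemma esqrt_ge0 (x : \bar R) : 0 <= esqrt x.
Proof. by case: x => [r| |] //=; rewrite lee_fin sqrtr_ge0. Qed.

Lemma vel_at_ge0 (W : state R -> state R) psi : 0 <= vel_at W psi.
Proof.
apply: limf_esup_ge0; first exact: filter_not_empty.
by move=> t; rewrite mule_ge0 ?esqrt_ge0 // lee_fin invr_ge0.
Qed.

Lemma vel_atE (W : state R -> state R) psi (c : R) : (0 <= c)%R ->
  vel_at W psi <= c%:E <-> Ev (fun t => normQ2 (iter t W psi)) (c ^+ 2).
Proof. by move=> c0; apply: VEL => // t; exact: normQ2_ge0. Qed.

Definition e0 : state R := fun k => if k == 0%R then (\col_(i < 2) (if i == 0%R then 1 else 0))%R else 0%R.

Lemma vel_ge0 (W : state R -> state R) : 0 <= vel W.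
Proof.
apply: (le_trans (vel_at_ge0 W e0)); apply: ereal_sup_ubound; exists e0 => //.
have vs1 : vsq (e0 0%R) = 1%R.
  by rewrite /e0 eqxx /vsq !mxE /= /csq /= expr1n expr0n /= !addr0.
have ez : forall k, k != 0%R -> e0 k = 0%R by move=> k /negbTE hk; rewrite /e0 hk.
split; [split|].
- rewrite /norm2 (esum_single _ (x := 0%R)); first by rewrite vs1 ltry.
    by move=> k; rewrite lee_fin vsq_ge0.
  by move=> k /eqP hk; rewrite ez // vsq0.
- rewrite /normQ2 (esum_single _ (x := 0%R)); first by rewrite ltry.
    by move=> k; rewrite lee_fin mulr_ge0 ?sqr_ge0 ?vsq_ge0.
  by move=> k /eqP hk; rewrite ez // vsq0 mulr0.
- rewrite /norm2 (esum_single _ (x := 0%R)); first by rewrite vs1.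
    by move=> k; rewrite lee_fin vsq_ge0.
  by move=> k /eqP hk; rewrite ez // vsq0.
Qed.


Lemma fin_of (x : \bar R) : 0 <= x -> x < +oo -> exists r : R, x = r%:E.
Proof. by case: x => [r| |] //; exists r. Qed.

Lemma SCALE (w : seq (qw_gen R)) (phi : state R) (a m : R) :
  is_walk w -> norm2 phi = a%:E -> normQ2 phi < +oo -> (0 <= m)%R ->
  vel (walk_act w) <= m%:E ->
  Ev (fun t => normQ2 (iter t (walk_act w) phi)) (a * m ^+ 2).
Proof.
move=> hw hn hq m0 hv.
have a0 : (0 <= a)%R by rewrite -lee_fin -hn norm2_ge0.
have hW : forall c psi, walk_act w (scal c psi) = scal c (walk_act w psi).
  by move=> c psi; exact: walk_act_scal.
case: (eqVneq a 0%R) => [a0e|an0].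
- have phi0 : phi = zs.
    apply/funext => k; apply: vsq_eq0; apply/eqP; rewrite eq_le vsq_ge0 andbT -lee_fin.
    have := @esum_le_term R _ (fun j => (vsq (phi j))%:E) k.
    rewrite -/(norm2 phi) hn a0e; apply => j; by rewrite lee_fin vsq_ge0.
  rewrite phi0 a0e mul0r; apply: (Ev_le (q' := fun _ => 0%:E)); last exact: Ev_const.
  by move=> t; rewrite iter_walk_zs normQ2_zs.
- have ap : (0 < a)%R by rewrite lt0r an0.
  pose r := Num.sqrt a.
  have r0 : (0 < r)%R by rewrite sqrtr_gt0.
  pose phi' := scal r^-1 phi.
  have hphi : phi = scal r phi' by rewrite /phi' scal_comp mulfV ?gt_eqF // scal1.
  have n' : norm2 phi' = 1.
    by rewrite /phi' norm2_scal hn -EFinM exprVn sqr_sqrtr // mulVf.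
  have [x hx] := fin_of (normQ2_ge0 phi) hq.
  have q' : normQ2 phi' < +oo by rewrite /phi' normQ2_scal hx -EFinM ltry.
  have v' : vel_at (walk_act w) phi' <= m%:E.
    apply: le_trans hv; apply: ereal_sup_ubound; exists phi' => //.
    by split; [split; [rewrite n' ltry|]|].
  move/(vel_atE _ _ m0): v' => Ev'.
  have -> : (fun t => normQ2 (iter t (walk_act w) phi)) =
            (fun t => a%:E * normQ2 (iter t (walk_act w) phi')).
    apply/funext => t; rewrite {1}hphi iter_scal // normQ2_scal sqr_sqrtr //.
  exact: Ev_scale.
Qed.


Lemma ineq1 (y d : R) : (0 < d)%R ->
  ((y - 1) ^+ 2 <= (1 + d) * y ^+ 2 + (1 + d^-1))%R.
Proof.
move=> d0.
have di : (0 <= d^-1)%R by rewrite invr_ge0 ltW.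
have h := mulr_ge0 di (sqr_ge0 (d * y + 1)).
have e : (d^-1 * (d * y + 1) ^+ 2 = d * y ^+ 2 + 2 * y + d^-1)%R.
  by field; rewrite gt_eqF.
nra.
Qed.

Definition embE (phi : state R) : state R :=
  fun n => if (n %% 2 == 0)%Z then phi (n %/ 2)%Z else 0%R.
Definition embO (phi : state R) : state R :=
  fun n => if (n %% 2 == 0)%Z then 0%R else phi (n %/ 2)%Z.

Lemma embE_ev phi : ev (embE phi) = phi.
Proof.
apply/funext => k; rewrite /embE ifT; last by apply/eqP; lia.
by have -> : ((2 * k)%R %/ 2)%Z = k by lia.
Qed.
Lemma embE_od phi : od (embE phi) = zs.
Proof. by apply/funext => k; rewrite /embE ifF //; apply/negbTE/negP => /eqP; lia. Qed.
Lemma embO_ev phi : ev (embO phi) = zs.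
Proof. by apply/funext => k; rewrite /embO ifT //; apply/eqP; lia. Qed.
Lemma embO_od phi : od (embO phi) = phi.
Proof.
apply/funext => k; rewrite /embO ifF; last by apply/negbTE/negP => /eqP; lia.
by have -> : ((2 * k + 1)%R %/ 2)%Z = k by lia.
Qed.

Lemma castE (k : int) : (((2 * k)%R)%:~R = 2 * k%:~R :> R)%R.
Proof. by rewrite intrM. Qed.
Lemma castO (k : int) : (((2 * k + 1)%R)%:~R = 2 * k%:~R + 1 :> R)%R.
Proof. by rewrite intrD intrM. Qed.

Lemma vsqf_ge0 (f : int -> R) (psi : state R) k : 0 <= ((f k) ^+ 2 * vsq (psi k))%:E.
Proof. by rewrite lee_fin mulr_ge0 ?sqr_ge0 ?vsq_ge0. Qed.

Lemma lower1 (w1 w2 : seq (qw_gen R)) phi (x : R) : (0 <= x)%R ->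
  vel_at (dsum (walk_act w1) (walk_act w2)) (embE phi) <= x%:E ->
  vel_at (walk_act w1) phi <= (x / 2)%:E.
Proof.
move=> x0 H; apply/vel_atE; first by rewrite divr_ge0.
move/(vel_atE _ _ x0): H => H.
have eq t : normQ2 (iter t (dsum (walk_act w1) (walk_act w2)) (embE phi)) =
            4%:E * normQ2 (iter t (walk_act w1) phi).
  rewrite iter_dsum normQ2_dsum embE_ev embE_od iter_walk_zs.
  rewrite [X in _ + X]esum1; last by move=> k _; rewrite vsq0 mulr0.
  rewrite adde0 /normQ2 -esumZ //; last by move=> k; rewrite lee_fin mulr_ge0 ?sqr_ge0 ?vsq_ge0.
  apply: eq_esum => k _; rewrite castE exprMn -mulrA EFinM.
  by rewrite (_ : (2 ^+ 2 : R) = 4)%R //; ring.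
have h4 : (0 < (4^-1 : R))%R by rewrite invr_gt0 ltr0n.
have H4 := Ev_scale h4 H.
have -> : ((x / 2) ^+ 2 = 4^-1 * x ^+ 2)%R by field.
apply: Ev_le H4 => t; rewrite eq muleA -EFinM mulVf // mul1e //.
Qed.

Lemma lower2 (w1 w2 : seq (qw_gen R)) phi (x : R) : is_walk w2 -> norm2 phi = 1 ->
  (0 <= x)%R ->
  vel_at (dsum (walk_act w1) (walk_act w2)) (embO phi) <= x%:E ->
  vel_at (walk_act w2) phi <= (x / 2)%:E.
Proof.
move=> hw n1 x0 H; apply/vel_atE; first by rewrite divr_ge0.
move/(vel_atE _ _ x0): H => H.
have eq t : normQ2 (iter t (dsum (walk_act w1) (walk_act w2)) (embO phi)) =
    \esum_(k in [set: int]) ((((2 * k + 1)%R)%:~R ^+ 2 *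
                              vsq (iter t (walk_act w2) phi k))%R)%:E.
  rewrite iter_dsum normQ2_dsum embO_ev embO_od iter_walk_zs.
  by rewrite [X in X + _]esum1 ?add0e // => k _; rewrite vsq0 mulr0.
have H' : Ev (fun t => 4%:E * normQ2 (iter t (walk_act w2) phi)) (x ^+ 2).
  apply: (Ev_delta (q' := fun t => normQ2 (iter t (dsum (walk_act w1) (walk_act w2)) (embO phi)))) => //.
    exact: sqr_ge0.
  move=> d d0; exists (1 + d^-1)%R => t.
  rewrite eq /normQ2 -esumZ //; last by move=> k; rewrite lee_fin mulr_ge0 ?sqr_ge0 ?vsq_ge0.
  rewrite -[(1 + d^-1)%:E]mule1 -n1 -(norm2_iter t phi hw) /norm2.
  have d1 : (0 <= 1 + d)%R by rewrite addr_ge0 // ltW.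
  have d2 : (0 <= 1 + d^-1)%R by rewrite addr_ge0 // invr_ge0 ltW.
  rewrite -esumZ //; last by move=> k; rewrite lee_fin mulr_ge0 ?sqr_ge0 ?vsq_ge0.
  rewrite -esumZ //; last by move=> k; rewrite lee_fin vsq_ge0.
  rewrite -esumD; first last.
  - move=> k _; rewrite -EFinM lee_fin; apply: mulr_ge0 => //.
    by try apply: mulr_ge0; rewrite ?sqr_ge0 ?vsq_ge0.
  - move=> k _; rewrite -EFinM lee_fin; apply: mulr_ge0 => //.
    by try apply: mulr_ge0; rewrite ?sqr_ge0 ?vsq_ge0.
  apply: le_esum => k _; rewrite -!EFinM -EFinD lee_fin castO.
  set v := vsq _; set y := (k%:~R : R).
  have v0 : (0 <= v)%R by exact: vsq_ge0.
  have e1 : (4 * (y ^+ 2 * v) = ((2 * y + 1) - 1) ^+ 2 * v)%R by ring.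
  have e2 : ((1 + d) * ((2 * y + 1) ^+ 2 * v) + (1 + d^-1) * v =
             ((1 + d) * (2 * y + 1) ^+ 2 + (1 + d^-1)) * v)%R by ring.
  by rewrite e1 e2 ler_wpM2r // ineq1.
have h4 : (0 < (4^-1 : R))%R by rewrite invr_gt0 ltr0n.
have H4 := Ev_scale h4 H'.
have -> : ((x / 2) ^+ 2 = 4^-1 * x ^+ 2)%R by field.
apply: Ev_le H4 => t; rewrite muleA -EFinM mulVf // mul1e //.
Qed.


Lemma embE_at (phi : state R) k : embE phi (2 * k)%R = phi k.
Proof. exact: (congr1 (fun f => f k) (embE_ev phi)). Qed.
Lemma embE_at' (phi : state R) k : embE phi (2 * k + 1)%R = 0%R.
Proof. exact: (congr1 (fun f => f k) (embE_od phi)). Qed.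
Lemma embO_at (phi : state R) k : embO phi (2 * k)%R = 0%R.
Proof. exact: (congr1 (fun f => f k) (embO_ev phi)). Qed.
Lemma embO_at' (phi : state R) k : embO phi (2 * k + 1)%R = phi k.
Proof. exact: (congr1 (fun f => f k) (embO_od phi)). Qed.

Lemma embE_norm2 phi : norm2 (embE phi) = norm2 phi.
Proof. by rewrite norm2_split embE_ev embE_od norm2_zs adde0. Qed.
Lemma embO_norm2 phi : norm2 (embO phi) = norm2 phi.
Proof. by rewrite norm2_split embO_ev embO_od norm2_zs add0e. Qed.

Lemma embE_normQ2 phi : normQ2 phi < +oo -> normQ2 (embE phi) < +oo.
Proof.
move=> hq; rewrite normQ2_split.
under eq_esum do rewrite embE_at.
under [X in _ + X]eq_esum do rewrite embE_at' vsq0 mulr0.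
rewrite [X in _ + X]esum1 // adde0.
have [x hx] := fin_of (normQ2_ge0 phi) hq.
have -> : \esum_(k in [set: int]) ((((2 * k)%R)%:~R ^+ 2 * vsq (phi k))%R)%:E =
          4%:E * normQ2 phi.
  rewrite /normQ2 -esumZ //; last by move=> k; rewrite lee_fin mulr_ge0 ?sqr_ge0 ?vsq_ge0.
  apply: eq_esum => k _; rewrite castE exprMn -mulrA EFinM.
  by rewrite (_ : (2 ^+ 2 : R) = 4)%R //; ring.
by rewrite hx -EFinM ltry.
Qed.

Lemma embO_normQ2 phi : norm2 phi < +oo -> normQ2 phi < +oo -> normQ2 (embO phi) < +oo.
Proof.
move=> hn hq; rewrite normQ2_split.
under eq_esum do rewrite embO_at vsq0 mulr0.
under [X in _ + X]eq_esum do rewrite embO_at'.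
rewrite [X in X + _]esum1 // add0e.
have [x hx] := fin_of (normQ2_ge0 phi) hq.
have [y hy] := fin_of (norm2_ge0 phi) hn.
apply: (@le_lt_trans _ _ (8%:E * normQ2 phi + 2%:E * norm2 phi)); last first.
  by rewrite hx hy -!EFinM -EFinD ltry.
rewrite /normQ2 /norm2 -!esumZ //; first last.
- by move=> k; rewrite lee_fin mulr_ge0 ?sqr_ge0 ?vsq_ge0.
- by move=> k; rewrite lee_fin vsq_ge0.
rewrite -esumD; first last.
- move=> k _; rewrite -EFinM lee_fin; apply: mulr_ge0; rewrite ?ler0n //.
  by try apply: mulr_ge0; rewrite ?sqr_ge0 ?vsq_ge0.
- move=> k _; rewrite -EFinM lee_fin; apply: mulr_ge0; rewrite ?ler0n //.
  by try apply: mulr_ge0; rewrite ?sqr_ge0 ?vsq_ge0.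
apply: le_esum => k _; rewrite -!EFinM -EFinD lee_fin castO.
set v := vsq _; set y0 := (k%:~R : R).
have v0 : (0 <= v)%R by exact: vsq_ge0.
have e1 : (8 * (y0 ^+ 2 * v) + 2 * v = (8 * y0 ^+ 2 + 2) * v)%R by ring.
rewrite e1 ler_wpM2r //.
have := sqr_ge0 (2 * y0 - 1); nra.
Qed.


Lemma int_sq_le (k : int) : ((k%:~R : R) ^+ 2 <= ((2 * k + 1)%R%:~R) ^+ 2)%R.
Proof.
rewrite castO; set y := (k%:~R : R).
have [h|h] : (0 <= k \/ k <= -1)%R by lia.
- have : (0 <= y)%R by rewrite /y ler0z.
  nra.
- have h' : (y <= (-1 : int)%:~R)%R by rewrite /y ler_int.
  have e : (((-1 : int)%:~R) = (-1 : R))%R by rewrite rmorphN rmorph1.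
  rewrite e in h'; nra.
Qed.

Lemma upper (w1 w2 : seq (qw_gen R)) psi (m : R) : is_walk w1 -> is_walk w2 ->
  norm2 psi = 1 -> normQ2 psi < +oo -> (0 <= m)%R ->
  vel (walk_act w1) <= m%:E -> vel (walk_act w2) <= m%:E ->
  vel_at (dsum (walk_act w1) (walk_act w2)) psi <= (2 * m)%:E.
Proof.
move=> hw1 hw2 n1 hq m0 hv1 hv2.
have hs := norm2_split psi; rewrite n1 in hs.
have [a ha] : exists a : R, norm2 (ev psi) = a%:E.
  apply: fin_of; first exact: norm2_ge0.
  by apply: (@le_lt_trans _ _ 1); [rewrite hs leeDl // norm2_ge0|rewrite ltry].
have [b hb] : exists b : R, norm2 (od psi) = b%:E.
  apply: fin_of; first exact: norm2_ge0.
  by apply: (@le_lt_trans _ _ 1); [rewrite hs leeDr // norm2_ge0|rewrite ltry].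
have hab : (a + b = 1)%R by move: hs; rewrite ha hb -EFinD => -[].
have a0 : (0 <= a)%R by rewrite -lee_fin -ha norm2_ge0.
have b0 : (0 <= b)%R by rewrite -lee_fin -hb norm2_ge0.
have q1 : normQ2 (ev psi) < +oo.
  apply: le_lt_trans hq; rewrite [normQ2 psi]normQ2_split; apply: lee_paddr.
    by apply: esum_ge0 => k _; rewrite lee_fin mulr_ge0 ?sqr_ge0 ?vsq_ge0.
  apply: le_esum => k _; rewrite lee_fin ler_wpM2r ?vsq_ge0 // castE.
  set y := (k%:~R : R); nra.
have q2 : normQ2 (od psi) < +oo.
  apply: le_lt_trans hq; rewrite [normQ2 psi]normQ2_split; apply: lee_paddl.
    by apply: esum_ge0 => k _; rewrite lee_fin mulr_ge0 ?sqr_ge0 ?vsq_ge0.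
  by apply: le_esum => k _; rewrite lee_fin ler_wpM2r ?vsq_ge0 // int_sq_le.
have E1 := SCALE hw1 ha q1 m0 hv1.
have E2 := SCALE hw2 hb q2 m0 hv2.
have E12 := Ev_add E1 E2.
have h4 : (0 < (4 : R))%R by rewrite ltr0n.
have E4 := Ev_scale h4 E12.
apply/vel_atE; first by rewrite mulr_ge0.
have -> : ((2 * m) ^+ 2 = 4 * (a * m ^+ 2 + b * m ^+ 2))%R by rewrite -mulrDl hab; ring.
apply: (Ev_delta _ _ E4); first by rewrite mulr_ge0 // addr_ge0 // mulr_ge0 // sqr_ge0.
move=> d d0; exists ((1 + d^-1) * b)%R => t.
have hbt : norm2 (iter t (walk_act w2) (od psi)) = b%:E by rewrite norm2_iter.
rewrite iter_dsum normQ2_dsum EFinM -hbt muleA -EFinM ge0_muleDr ?normQ2_ge0 //.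
have c0 : (0 <= (1 + d) * 4)%R by rewrite mulr_ge0 // addr_ge0 // ltW.
have d2 : (0 <= 1 + d^-1)%R by rewrite addr_ge0 // invr_ge0 ltW.
rewrite /normQ2 /norm2 -!esumZ //; try by move=> k; rewrite lee_fin;
  first [exact: vsq_ge0 | rewrite mulr_ge0 ?sqr_ge0 ?vsq_ge0].
rewrite -addeA; apply: leeD.
  apply: le_esum => k _; rewrite -EFinM lee_fin mulrA ler_wpM2r ?vsq_ge0 //.
  rewrite castE; set y := (k%:~R : R); nra.
rewrite -esumD; first last.
- move=> k _; rewrite -EFinM lee_fin; apply: mulr_ge0 => //.
  by try apply: mulr_ge0; rewrite ?sqr_ge0 ?vsq_ge0.
- move=> k _; rewrite -EFinM lee_fin; apply: mulr_ge0 => //.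
  by try apply: mulr_ge0; rewrite ?sqr_ge0 ?vsq_ge0.
apply: le_esum => k _; rewrite -!EFinM -EFinD lee_fin castO.
set v := vsq _; set y := (k%:~R : R).
have v0 : (0 <= v)%R by exact: vsq_ge0.
have e1 : ((1 + d) * 4 * (y ^+ 2 * v) + (1 + d^-1) * v =
           ((1 + d) * (- (2 * y)) ^+ 2 + (1 + d^-1)) * v)%R by ring.
rewrite e1 ler_wpM2r //.
have := ineq1 (- (2 * y)) d0.
by rewrite (_ : (- (2 * y) - 1 = - (2 * y + 1))%R) ?sqrrN //; ring.
Qed.

End M.

Lemma max_ub (R : realType) (a b : \bar R) : (a <= Order.max a b)%E /\ (b <= Order.max a b)%E.
Proof. by rewrite !le_max !lexx orbT. Qed.

Theorem lemma3p5 (R : realType) (w1 w2 : seq (qw_gen R)) :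
  is_walk w1 -> is_walk w2 ->
  vel (dsum (walk_act w1) (walk_act w2)) =
  (2%:E * Order.max (vel (walk_act w1)) (vel (walk_act w2)))%E.
Proof.
move=> hw1 hw2.
have v10 := vel_ge0 (walk_act w1).
have v20 := vel_ge0 (walk_act w2).
have vD0 := vel_ge0 (dsum (walk_act w1) (walk_act w2)).
apply/le_anti/andP; split.
- have hM1 : (vel (walk_act w1) <= Order.max (vel (walk_act w1)) (vel (walk_act w2)))%E.
    exact: (max_ub _ _).1.
  have hM2 : (vel (walk_act w2) <= Order.max (vel (walk_act w1)) (vel (walk_act w2)))%E.
    exact: (max_ub _ _).2.
  have M0 := le_trans v10 hM1.
  move: hM1 hM2 M0; case: (Order.max _ _) => [m| |] hM1 hM2 M0 //.
  + have m0 : (0 <= m)%R by rewrite -lee_fin.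
    apply: ge_ereal_sup => _ [psi [[hn hq] n1] <-].
    rewrite -EFinM.
    apply: upper; [exact: hw1|exact: hw2|exact: n1|exact: hq|exact: m0|exact: hM1|exact: hM2].
  + have -> : (2%:E * +oo = +oo :> \bar R)%E by rewrite gt0_muley // lte_fin.
    exact: leey.
- move: vD0 (@lower1 R w1 w2) (@lower2 R w1 w2).
  case E: (vel (dsum (walk_act w1) (walk_act w2))) => [x| |] vD0 L1 L2; last first.
    by move: vD0.
    exact: leey.
  have x0 : (0 <= x)%R by rewrite -lee_fin.
  have H : (Order.max (vel (walk_act w1)) (vel (walk_act w2)) <= (x / 2)%:E)%E.
    rewrite ge_max; apply/andP; split.
    * apply: ge_ereal_sup => _ [phi [[hn hq] n1] <-]; apply: L1; first exact: x0.
      rewrite -E; apply: ereal_sup_ubound; exists (embE phi); last reflexivity.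
      split; [split|].
      - by rewrite embE_norm2.
      - exact: embE_normQ2.
      - by rewrite embE_norm2.
    * apply: ge_ereal_sup => _ [phi [[hn hq] n1] <-]; apply: L2; [exact: hw2|exact: n1|exact: x0|].
      rewrite -E; apply: ereal_sup_ubound; exists (embO phi); last reflexivity.
      split; [split|].
      - by rewrite embO_norm2.
      - exact: embO_normQ2.
      - by rewrite embO_norm2.
  apply: le_trans (lee_wpmul2l _ H) _; first by rewrite lee_fin.
  by rewrite -EFinM lee_fin; lra.
Qed.
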